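(* For all constraint sets $C,\tilde C$ and substitutions $\sigma$: if $C\to^{*\,\sigma}\tilde C$ and $\tilde C$ is in normal form, then there exists a unique substitution $\sigma_c$ with $\sigma_c\vdash_{\min} C$.
   Context: There are two binding times $\mathsf{S}$, $\mathsf{D}$; $\mathcal{L}$ is a finite set of labels disjoint from them. A binding-time expression is a binding time or a label; a constraint is a formal pair $B_1\preceq B_2$; a constraint set is a finite set of constraints, with $\mathrm{labels}(C)=\{l\in\mathcal{L}:\exists B.\ l\preceq B\in C\text{ or }B\preceq l\in C\}$. $C$ is in normal form if every $c\in C$ has one of the forms $\mathsf{S}\preceq l$, $l\preceq\mathsf{D}$, $l\preceq\tilde l$ with $l,\tilde l\in\mathcal{L}$. Satisfaction $\vdash b_1\preceq b_2$ holds exactly for $\mathsf{S}\preceq\mathsf{D}$, $\mathsf{S}\preceq\mathsf{S}$, $\mathsf{D}\preceq\mathsf{D}$. A substitution is a finite partial map $\sigma:\mathcal{L}\rightharpoonup\{\mathsf{S},\mathsf{D}\}$, extended to binding-time expressions as the identity on binding times and on labels outside its domain; $\sigma(C)=\{\sigma(B_1)\preceq\sigma(B_2): B_1\preceq B_2\in C\}$. The extension $\sigma\oplus\hat\sigma$ has domain $\mathrm{dom}(\sigma)\cup\mathrm{dom}(\hat\sigma)$ and maps $l$ to $\sigma(l)$ if $l\in\mathrm{dom}(\sigma)$, else to $\hat\sigma(l)$. $\sigma\vdash C$ means: for every $B_1\preceq B_2\in C$, $\sigma(B_1),\sigma(B_2)$ are binding times and $\vdash\sigma(B_1)\preceq\sigma(B_2)$.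 $\sigma_c\vdash_{\min}C$ means: $\sigma_c\vdash C$, $\mathrm{dom}(\sigma_c)=\mathrm{labels}(C)$, and for every $\sigma\vdash C$ and $l\in\mathrm{labels}(C)$, $\vdash\sigma_c(l)\preceq\sigma(l)$. Write $[\,]$ for the empty substitution and $[l\mapsto b]$ for the substitution with domain $\{l\}$. The normalization relation $C\to^{\sigma}\tilde C$ holds if $C=C_0\uplus\{c\}$ and one of: (a) $c=\mathsf{S}\preceq\mathsf{S}$, $\sigma=[\,]$, $\tilde C=C_0$; (b) $c=\mathsf{S}\preceq\mathsf{D}$, $\sigma=[\,]$, $\tilde C=C_0$; (c) $c=\mathsf{D}\preceq\mathsf{D}$, $\sigma=[\,]$, $\tilde C=C_0$; (d) $c=l\preceq\mathsf{S}$ with $l\in\mathcal{L}$, $\sigma=[l\mapsto\mathsf{S}]$, $\tilde C=[l\mapsto\mathsf{S}](C_0)$; (e) $c=\mathsf{D}\preceq l$ with $l\in\mathcal{L}$, $\sigma=[l\mapsto\mathsf{D}]$, $\tilde C=[l\mapsto\mathsf{D}](C_0)$. Exhaustive application $C\to^{*\,\sigma}\tilde C$ means there exist $k\ge 0$ and $C=\tilde C_0\to^{\sigma_1}\tilde C_1\to^{\sigma_2}\cdots\to^{\sigma_k}\tilde C_k=\tilde C$ with $\sigma=\sigma_1\oplus\cdots\oplus\sigma_k$, and no normalization step applies to $\tilde C$. *)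

(* Defs.v *)
From HB Require Import structures.
From mathcomp Require Import all_boot.
Set Implicit Arguments. Unset Strict Implicit. Unset Printing Implicit Defensive.

Inductive bt := BS | BD.

Definition bt2b (b : bt) : bool := if b is BS then true else false.
Definition b2bt (x : bool) : bt := if x then BS else BD.
Lemma bt2bK : cancel bt2b b2bt. Proof. by case. Qed.
HB.instance Definition _ := Finite.copy bt (can_type bt2bK).

Section Defs.
Variable L : finType.

(* binding-time expressions: a binding time (inl) or a label (inr);
   the sum type makes labels disjoint from binding times *)
Definition bte := (bt + L)%type.
(* a constraint B1 <= B2 is the formal pair (B1, B2) *)
Definition constraint := (bte * bte)%type.
Definition cset := {set constraint}.

Definition labels (C : cset) : {set L} :=
  [set l | [exists c in C, (c.1 == inr l) || (c.2 == inr l)]].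

Definition normal_form (C : cset) : Prop :=
  forall c, c \in C ->
    (exists l, c = (inl BS, inr l)) \/ (exists l, c = (inr l, inl BD)) \/
    (exists l l', c = (inr l, inr l')).

Definition bt_le (b1 b2 : bt) : bool :=
  match b1, b2 with
  | BS, BD | BS, BS | BD, BD => true
  | _, _ => false
  end.

Definition bte_le (B1 B2 : bte) : Prop :=
  match B1, B2 with
  | inl b1, inl b2 => bt_le b1 b2
  | _, _ => False
  end.

Definition subst := {ffun L -> option bt}.
Definition dom (s : subst) : {set L} := [set l | s l != None].
Definition empty_subst : subst := [ffun _ => None].
Definition single (l : L) (b : bt) : subst :=
  [ffun l' => if l' == l then Some b else None].
Definition ext (s s' : subst) : subst :=
  [ffun l => if s l is Some b then Some b else s' l].

Definition app (s : subst) (B : bte) : bte :=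
  match B with
  | inl b => inl b
  | inr l => if s l is Some b then inl b else inr l
  end.
Definition app_c (s : subst) (c : constraint) : constraint :=
  (app s c.1, app s c.2).
Definition app_set (s : subst) (C : cset) : cset := [set app_c s c | c in C].

Definition sat (s : subst) (C : cset) : Prop :=
  forall c, c \in C -> bte_le (app s c.1) (app s c.2).

Definition min_sol (sc : subst) (C : cset) : Prop :=
  [/\ sat sc C, dom sc = labels C &
      forall s, sat s C -> forall l, l \in labels C ->
        bte_le (app sc (inr l)) (app s (inr l))].

(* one normalization step C ->^sigma C'; C = C0 ⊎ {c} means c \in C, C0 = C :\ c *)
Inductive step : cset -> subst -> cset -> Prop :=
| step_SS (C : cset) : (inl BS, inl BS) \in C ->
    step C empty_subst (C :\ (inl BS, inl BS))
| step_SD (C : cset) : (inl BS, inl BD) \in C ->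
    step C empty_subst (C :\ (inl BS, inl BD))
| step_DD (C : cset) : (inl BD, inl BD) \in C ->
    step C empty_subst (C :\ (inl BD, inl BD))
| step_lS (C : cset) (l : L) : (inr l, inl BS) \in C ->
    step C (single l BS) (app_set (single l BS) (C :\ (inr l, inl BS)))
| step_Dl (C : cset) (l : L) : (inl BD, inr l) \in C ->
    step C (single l BD) (app_set (single l BD) (C :\ (inl BD, inr l))).

(* finite chains of steps, composing substitutions with ext:
   sigma = sigma_1 (+) ... (+) sigma_k *)
Inductive steps : cset -> subst -> cset -> Prop :=
| steps_refl (C : cset) : steps C empty_subst C
| steps_cons (C : cset) (s1 : subst) (C1 : cset) (s2 : subst) (C2 : cset) : step C s1 C1 -> steps C1 s2 C2 ->
    steps C (ext s1 s2) C2.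

Definition irreducible (C : cset) : Prop := ~ exists s C', step C s C'.

Definition exhaustive (C : cset) (s : subst) (C' : cset) : Prop :=
  steps C s C' /\ irreducible C'.

End Defs.

(* Main.v *)
Require Import Defs.
From mathcomp Require Import all_boot.

Set Implicit Arguments.
Unset Strict Implicit.

Section Aux.
Variable L : finType.

Definition bte_leb (B1 B2 : bte L) : bool :=
  match B1, B2 with inl b1, inl b2 => bt_le b1 b2 | _, _ => false end.

Lemma bte_leP (B1 B2 : bte L) : reflect (bte_le B1 B2) (bte_leb B1 B2).
Proof. by case: B1 => [b1|l1]; case: B2 => [b2|l2] /=; try apply: idP; constructor. Qed.

Definition satb (s : subst L) (C : cset L) : bool :=
  [forall c in C, bte_leb (app s c.1) (app s c.2)].

Lemma satP (s : subst L) (C : cset L) : reflect (sat s C) (satb s C).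
Proof.
apply: (iffP forall_inP) => H c cC; first by apply/bte_leP; apply: H.
by apply/bte_leP; apply: H.
Qed.

Lemma app_ext (s t : subst L) B : app (ext s t) B = app t (app s B).
Proof. by case: B => [b|l] //=; rewrite ffunE; case: (s l). Qed.

Lemma sat_app_set (s t : subst L) (C : cset L) : sat t (app_set s C) -> sat (ext s t) C.
Proof.
move=> H c cC; have := H _ (imset_f (app_c s) cC).
by rewrite /app_c /= !app_ext.
Qed.

Lemma sat_D1 (t : subst L) (C : cset L) (c : constraint L) : sat t (C :\ c) -> bte_le (app t c.1) (app t c.2) -> sat t C.
Proof.
move=> H Hc c' c'C; case: (eqVneq c' c) => [->//|ne].
by apply: H; rewrite in_setD1 ne.
Qed.

Lemma step_sat (C : cset L) s1 C1 (t : subst L) : step C s1 C1 -> sat t C1 -> exists t', sat t' C.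
Proof.
case=> {}C.
- move=> _ H; exists t. exact: (@sat_D1 _ C (inl BS, inl BS)).
- move=> _ H; exists t; exact: (@sat_D1 _ C (inl BS, inl BD)).
- move=> _ H; exists t; exact: (@sat_D1 _ C (inl BD, inl BD)).
- move=> l _ H; exists (ext (single l BS) t).
  apply: (@sat_D1 _ C (inr l, inl BS)); first exact: sat_app_set.
  by rewrite /= !ffunE eqxx.
- move=> l _ H; exists (ext (single l BD) t).
  apply: (@sat_D1 _ C (inl BD, inr l)); first exact: sat_app_set.
  by rewrite /= !ffunE eqxx.
Qed.

Lemma steps_sat (C : cset L) s Ct : steps C s Ct -> forall t, sat t Ct -> exists t', sat t' C.
Proof.
elim=> {C s Ct} [C t H|C s1 C1 s2 C2 st _ IH t H]; first by exists t.
have [t' Ht'] := IH t H; exact: step_sat st Ht'.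
Qed.

Lemma nf_sat (Ct : cset L) : normal_form Ct -> sat [ffun _ => Some BS] Ct.
Proof.
move=> H c cC; case: (H c cC) => [[l ->]|[[l ->]|[l [l' ->]]]]; by rewrite /= !ffunE.
Qed.

Lemma sat_label (s : subst L) (C : cset L) (l : L) : sat s C -> l \in labels C -> exists b, s l = Some b.
Proof.
move=> H; rewrite inE => /existsP [c /andP [cC /orP [] /eqP E]];
  have := H c cC; rewrite E /=.
- by case: (s l) => [b|] //; exists b.
- by case: (app s c.1) => //; case: (s l) => [b|] //; exists b.
Qed.

End Aux.

Theorem theorem2 (L : finType) (C Ct : cset L) (s : subst L) :
  exhaustive C s Ct -> normal_form Ct ->
  exists sc : subst L, min_sol sc C /\ (forall sc', min_sol sc' C -> sc' = sc).
Proof.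
move=> [st _] nf.
have [t0 Ht0] := steps_sat st (nf_sat nf).
pose ex l := [exists t, satb t C && (t l == Some BS)].
pose sc : subst L := [ffun l => if l \in labels C then Some (if ex l then BS else BD) else None].
have exP l : ex l -> exists t, sat t C /\ t l = Some BS.
  by move=> /existsP [t /andP [/satP Ht /eqP E]]; exists t.
have exI l t : sat t C -> t l = Some BS -> ex l.
  by move=> Ht E; apply/existsP; exists t; rewrite E eqxx andbT; apply/satP.
have lab c l : c \in C -> (c.1 == inr l) || (c.2 == inr l) -> l \in labels C.
  by move=> cC E; rewrite inE; apply/existsP; exists c; rewrite cC.
have min : min_sol sc C.
  split.
  - move=> [B1 B2] cC /=.
    have sat1 := Ht0 _ cC; move: sat1 => /=.
    case: B1 cC => [b1|l1] cC; case: B2 cC => [b2|l2] cC /=.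
    + by [].
    + move=> _; rewrite ffunE (lab _ l2 cC) ?eqxx ?orbT //=.
      case: b1 cC => //= cC; case E: (ex l2) => //=.
      move/exP: E => [t [Ht E]]; have := Ht _ cC; by rewrite /= E.
    + move=> _; rewrite ffunE (lab _ l1 cC) ?eqxx ?orbT //=.
      case E: (ex l1) => //=; case: b2 cC => //= cC.
      have [b Eb] := sat_label Ht0 (lab _ l1 cC (introT orP (or_introl (eqxx _)))).
      have := Ht0 _ cC; rewrite /= Eb; case: b Eb => //= Eb.
      by rewrite (exI _ _ Ht0 Eb) in E.
    + move=> _; rewrite !ffunE (lab _ l1 cC) ?eqxx ?orbT //= (lab _ l2 cC) ?eqxx ?orbT //=.
      case E1: (ex l1); case E2: (ex l2) => //=.
      move/exP: E2 => [t [Ht E]]; have := Ht _ cC; rewrite /= E.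
      case Et: (t l1) => [b|] //; case: b Et => //= Et _.
      by rewrite (exI _ _ Ht Et) in E1.
  - by apply/setP => l; rewrite /dom inE ffunE; case: (l \in labels C).
  - move=> s' Hs' l lC; have [b Eb] := sat_label Hs' lC.
    rewrite /= ffunE lC Eb; case: b Eb => Eb; last by case: (ex l).
    by rewrite (exI _ _ Hs' Eb).
exists sc; split => // sc' [H1 H2 H3]; case: min => [M1 M2 M3].
apply/ffunP => l; case lC: (l \in labels C); last first.
  have: l \notin dom sc' by rewrite H2 lC.
  have: l \notin dom sc by rewrite M2 lC.
  by rewrite !inE !negbK => /eqP -> /eqP ->.
have := H3 _ M1 l lC; have := M3 _ H1 l lC; rewrite /=.
by case: (sc l) => [[]|]; case: (sc' l) => [[]|].
Qed.
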